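(* Let $G$ be an abelian group of order $v$, and let $m>1$, $k\ge 1$ be integers. A non-disjoint $(v,m,k,1)$-SEDF exists in $G$ if and only if $m=2$ and $v=k^2$.
   Context: Groups are written additively. For subsets $A,B$ of $G$, $\Delta(A,B)$ is the multiset $\{a-b:a\in A,b\in B\}$ and $\lambda G$ is the multiset with each element of $G$ exactly $\lambda$ times. For $G$ of order $v$ and $m>1$, a family of $k$-subsets $\{A_1,\dots,A_m\}$ of $G$ (not required to be disjoint) is a non-disjoint $(v,m,k,\lambda)$-SEDF if for each $1\le i\le m$ the multiset union $\bigcup_{j\neq i}\Delta(A_i,A_j)$ equals $\lambda G$. *)

(* Defs.v *)
From mathcomp Require Import all_boot all_order all_algebra.
Set Implicit Arguments. Unset Strict Implicit. Unset Printing Implicit Defensive.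
Import GRing.Theory.
Local Open Scope ring_scope.

(* Delta(A,B) as a multiset: multiplicity of g is #{(a,b) in A x B | a - b = g}.
   The multiset union over j <> i of Delta(A_i, A_j) equals lam G iff every
   g in G has total multiplicity exactly lam. *)
Definition delta_mult (G : finZmodType) (A B : {set G}) (g : G) : nat :=
  #|[set p : G * G | [&& p.1 \in A, p.2 \in B & p.1 - p.2 == g]]|.

(* Non-disjoint (v,m,k,lam)-SEDF in G (v = #|G|), family indexed by 'I_m,
   sets not required to be disjoint (nor distinct). *)
Definition is_SEDF (G : finZmodType) (m k lam : nat) (A : 'I_m -> {set G}) : Prop :=
  (1 < m)%N /\ (forall i, #|A i| = k) /\
  (forall (i : 'I_m) (g : G), (\sum_(j < m | j != i) delta_mult (A i) (A j) g)%N = lam).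

(* Main.v *)
Require Import Defs.
From mathcomp Require Import all_boot all_order all_algebra.
From mathcomp Require Import all_fingroup all_solvable.
From mathcomp Require Import zify.
Set Implicit Arguments. Unset Strict Implicit. Unset Printing Implicit Defensive.

Local Open Scope group_scope.
Lemma abelian_subgroup_of_order d : forall (gT : finGroupType) (G : {group gT}),
  abelian G -> d %| #|G| -> exists H : {group gT}, H \subset G /\ #|H| = d.
Proof.
elim: d {-2}d (leqnn d) => [|n IHn] d led gT G abG dG.
  by move: led; rewrite leqn0 => /eqP d0; move: dG; rewrite d0 dvd0n => /eqP h; move: (cardG_gt0 G); rewrite h.
have [d1|d1] := leqP d 1.
  have d0 : 0 < d by apply: dvdn_gt0 dG.
  have -> : d = 1%N by apply/eqP; rewrite eqn_leq d1 d0.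
  by exists 1%G; rewrite sub1G cards1.
set p := pdiv d.
have pp : prime p := pdiv_prime d1.
have pd : p %| d := pdiv_dvd d.
have [z zG oz] := Cauchy pp (dvdn_trans pd dG).
have KG : <[z]> \subset G by rewrite cycle_subG.
have nKG : (<[z]> <| G)%g by rewrite -sub_abelian_normal.
have oK : #|<[z]>| = p by [].
have oGK : #|G / <[z]>| = #|G| %/ p.
  rewrite card_quotient ?normal_norm // -(Lagrange KG) oK mulKn //.
  exact: prime_gt0.
have d0 : 0 < d by apply: dvdn_gt0 dG.
have : d %/ p %| #|G / <[z]>|.
  by rewrite oGK dvdn_divRL ?(dvdn_trans pd dG) // divnK.
have ltd : d %/ p <= n by rewrite -ltnS; apply: leq_trans led; apply: ltn_Pdiv => //; apply: prime_gt1.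
case/(IHn _ ltd _ _ (quotient_abelian _ abG)) => Hb [sHb oHb].
case: (inv_quotientS nKG sHb) => H defH sKH sHG.
exists H; split => //.
have := card_quotient (subset_trans sHG (normal_norm nKG)).
rewrite -defH oHb => e.
by rewrite -(Lagrange sKH) -e oK mulnC divnK.
Qed.
Local Close Scope group_scope.
Import GRing.Theory FinRing.Theory.

Section Aux.
Variable G : finZmodType.
Local Open Scope ring_scope.

Lemma pos_delta (A B : {set G}) a b g :
  a \in A -> b \in B -> a - b = g -> (0 < delta_mult A B g)%N.
Proof.
move=> ha hb e; apply/card_gt0P; exists (a, b).
by rewrite inE /= ha hb e eqxx.
Qed.

Lemma two_contrib m (A : 'I_m -> {set G}) i j1 j2 g :
  j1 != i -> j2 != i -> j1 != j2 ->
  (0 < delta_mult (A i) (A j1) g)%N -> (0 < delta_mult (A i) (A j2) g)%N ->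
  (1 < \sum_(j < m | j != i) delta_mult (A i) (A j) g)%N.
Proof.
move=> j1i j2i j12 h1 h2.
rewrite (bigD1 j1) //= (bigD1 j2) /=; last by rewrite j2i eq_sym j12.
move: h1 h2; set s := \sum_(_ < m | _) _; lia.
Qed.

Lemma partner m (A : 'I_m -> {set G}) i :
  \sum_(j < m | j != i) delta_mult (A i) (A j) 0 = 1%N ->
  exists j x, j != i /\ x \in A i /\ x \in A j.
Proof.
move=> hs.
have : \sum_(j < m | j != i) delta_mult (A i) (A j) 0 != 0%N by rewrite hs.
rewrite sum_nat_eq0 negb_forall => /existsP [j].
rewrite negb_imply -lt0n => /andP [ji /card_gt0P [[a b]]].
rewrite inE /= => /and3P [ha hb /eqP e].
move/eqP: e; rewrite subr_eq0 => /eqP e.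
by exists j, a; split => //; split => //; rewrite e.
Qed.

Lemma sum_delta (A B : {set G}) :
  (\sum_(g : G) delta_mult A B g)%N = (#|A| * #|B|)%N.
Proof.
rewrite -cardsX -sum1_card (partition_big (fun p => p.1 - p.2) predT) //=.
apply: eq_bigr => g _; rewrite /delta_mult -sum1_card; apply: eq_bigl => p.
by rewrite !inE andbA.
Qed.

Lemma delta_swap (A B : {set G}) g :
  delta_mult B A g = delta_mult A B (- g).
Proof.
pose sw := fun p : G * G => (p.2, p.1).
have swK : involutive sw by case.
rewrite /delta_mult -(card_imset _ (inv_inj swK)) (can2_imset_pre _ swK swK).
apply: eq_card => p; rewrite !inE /= -(eqr_opp (p.2 - p.1)) opprB.
by rewrite andbCA.
Qed.

Lemma factorization (k : nat) : #|G| = (k ^ 2)%N -> (0 < k)%N ->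
  exists A B : {set G}, [/\ #|A| = k, #|B| = k & forall g, delta_mult A B g = 1%N].
Proof.
move=> hG hk.
have dk : (k %| #|[set: G]|)%N by rewrite cardsT hG -mulnn dvdn_mulr.
have [H [_ oH]] := @abelian_subgroup_of_order k _ [set: G]%G (zmod_abelian _) dk.
set P := rcosets H [set: G].
have hP : partition P [set: G] := rcosets_partition (subsetT H).
set X := transversal P [set: G].
have hX := transversalP hP.
have cX : #|X| = k.
  rewrite (card_transversal hX).
  have := Lagrange (subsetT H); rewrite oH cardsT hG -mulnn => /eqP.
  by rewrite eqn_pmul2l // => /eqP.
exists H, [set - x | x in X]; split => //.
  by rewrite card_imset //; apply: oppr_inj.
move=> g.
case/and3P: hX => _ _ /forallP /(_ (H :* g)%g).
have -> : ((H :* g)%g \in P) by apply/rcosetsP; exists g; rewrite ?inE.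
move=> /= /cards1P [c hc].
have : c \in X :&: (H :* g)%g by rewrite hc set11.
rewrite inE mem_rcoset => /andP [cX' cH].
rewrite /delta_mult -(cards1 (g - c, - c)); apply: eq_card => -[a b]; rewrite !inE /=.
apply/idP/idP.
  case/and3P => ha /imsetP [x xX ->] /eqP e.
  have : x \in X :&: (H :* g)%g.
    rewrite inE xX mem_rcoset.
    have -> : (x * g^-1)%g = (a^-1)%g.
      by change (x - g = - a); rewrite -e opprK opprD addrCA subrr addr0.
    by rewrite groupV.
  rewrite hc inE => /eqP xc.
  by rewrite -e xc opprK addrK.
move/eqP => [-> ->].
rewrite opprK subrK eqxx andbT.
have -> : g - c = ((c * g^-1)^-1)%g.
  by rewrite zmodMgE !zmodVgE opprD opprK addrC.
by rewrite groupV cH; apply: imset_f.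
Qed.

End Aux.

Theorem theorem2p10 (G : finZmodType) (v m k : nat) :
  #|G| = v -> (1 < m)%N -> (1 <= k)%N ->
  ((exists A : 'I_m -> {set G}, is_SEDF k 1 A) <-> (m = 2 /\ v = k ^ 2)%N).
Proof.
move=> hv hm hk; split.
  case=> A [_ [hc hs]].
  have m2 : m = 2%N.
    case: (ltngtP m 2) => // [m_lt|m_gt]; first by lia.
    exfalso.
    have h0 : (0 < m)%N by lia.
    pose i0 : 'I_m := Ordinal h0.
    pose o1 : 'I_m := Ordinal hm.
    pose o2 : 'I_m := Ordinal m_gt.
    have [j [x [ji [xi xj]]]] := partner (hs i0 0%R).
    pose l := if j == o1 then o2 else o1.
    have li : l != i0 by rewrite /l; case: ifP.
    have lj : l != j.
      rewrite /l; case: ifP => [/eqP -> //|/negbT]; by rewrite eq_sym.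
    have [l' [y [l'l [yl yl']]]] := partner (hs l 0%R).
    case: (eqVneq l' i0) => [el'|l'i].
      have jl : j != l by rewrite eq_sym.
      have := @two_contrib _ _ A i0 j l 0%R ji li jl
        (pos_delta xi xj (subrr x)).
      rewrite -el' hs => /(_ (pos_delta yl' yl (subrr y))) //.
    case: (eqVneq l' j) => [el'|l'j].
      have ij : i0 != j by rewrite eq_sym.
      have il : i0 != l by rewrite eq_sym.
      have := @two_contrib _ _ A j i0 l 0%R ij lj il (pos_delta xj xi (subrr x)).
      rewrite -el' hs => /(_ (pos_delta yl' yl (subrr y))) //.
    have ll' : l != l' by rewrite eq_sym.
    have := @two_contrib _ _ A i0 l l' (x - y)%R li l'i ll'
      (pos_delta xi yl erefl) (pos_delta xi yl' erefl).
    by rewrite hs.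
  subst m; split => //.
  pose o1 : 'I_2 := @Ordinal 2 1 isT.
  have e1 : forall g, delta_mult (A ord0) (A o1) g = 1%N.
    move=> g; have := hs ord0 g.
    rewrite (bigD1 o1) //= big1 ?addn0 // => j /andP [j0 j1].
    by exfalso; case: j j0 j1 => [[|[|n]] hj].
  have : (\sum_(g : G) delta_mult (A ord0) (A o1) g = \sum_(g : G) 1)%N.
    by apply: eq_bigr => g _; rewrite e1.
  by rewrite sum_delta !hc sum1_card hv mulnn.
case=> m2 hv2; subst m; rewrite hv2 in hv.
have [H [B [hH hB hd]]] := factorization hv hk.
exists (fun i : 'I_2 => if i == ord0 then H else B).
split => //; split.
  by move=> i; case: ifP.
move=> [[|[|n]] hi] g; last by exfalso; move: hi; rewrite !ltnS ltn0.
  rewrite (bigD1 (@Ordinal 2 1 isT)) //= hd big1 ?addn0 //.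
  by move=> [[|[|j]] hj] //=; rewrite ?andbF //; move: hj; rewrite !ltnS ltn0.
rewrite (bigD1 ord0) //= delta_swap hd big1 ?addn0 //.
by move=> [[|[|j]] hj] //=; rewrite ?andbF //; move: hj; rewrite !ltnS ltn0.
Qed.
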